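(* Let $F$ be the elementary cellular automaton with rule number 156. For every nonempty finite word $u\in\{0,1\}^*$, the deterministic communication complexity of $\textsc{SInv}_{F,u}$ restricted to inputs of length $n$ is bounded by a constant independent of $n$.
   Context: An elementary cellular automaton (ECA) with rule number $N\in\{0,\dots,255\}$ is the map $F:\{0,1\}^{\mathbb Z}\to\{0,1\}^{\mathbb Z}$ given by $F(x)_i=f(x_{i-1},x_i,x_{i+1})$. Here the local rule $f:\{0,1\}^3\to\{0,1\}$ is determined by $N=\sum_{a,b,c\in\{0,1\}}2^{4a+2b+c}f(a,b,c)$. For a nonempty finite word $u$, $p_u\in\{0,1\}^{\mathbb Z}$ is defined by $(p_u)_i=u_{i\bmod |u|}$. For a finite word $x$, $p_u[x]$ is the configuration equal to $x$ on positions $0,\dots,|x|-1$ and to $p_u$ elsewhere. $\textsc{SInv}_{F,u}$ is the decision problem: on input a finite word $x$, decide whether there is an integer $w$ such that for all $t\ge0$ the set of positions where $F^t(p_u)$ and $F^t(p_u[x])$ differ is contained in an interval of length $w$. For each $n$, it is regarded as a function $\{0,1\}^n\to\{0,1\}$. For a function $g:X\times Y\to Z$, $D(g)$ is the minimal depth of a deterministic two-party protocol computing $g$. In such a protocol, Alice knows $x$ and Bob knows $y$. The protocol is a binary tree: each internal node is labelled by a function of Alice's input only or of Bob's input only, with values in $\{\text{left},\text{right}\}$, and each leaf is labelled by an output value. For $g:\{0,1\}^m\to Z$, set $D(g)=\max_{0\le i<m}D(g_i)$, where $g_i:\{0,1\}^i\times\{0,1\}^{m-i}\to Z$ is $g_i(x,y)=g(xy)$.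 *)

(* Defs.v *)
From Stdlib Require Import ZArith List Bool.
Import ListNotations.
Open Scope Z_scope.

Definition config := Z -> bool.

Definition local_rule (N : Z) (a b c : bool) : bool :=
  Z.testbit N (4 * Z.b2z a + 2 * Z.b2z b + Z.b2z c).

Definition eca (N : Z) (x : config) : config :=
  fun i => local_rule N (x (i - 1)) (x i) (x (i + 1)).

Definition eca_iter (N : Z) (t : nat) (x : config) : config :=
  Nat.iter t (eca N) x.

Definition periodic (u : list bool) : config :=
  fun i => nth (Z.to_nat (i mod Z.of_nat (length u))) u false.

Definition patch (u x : list bool) : config :=
  fun i => if (0 <=? i) && (i <? Z.of_nat (length x))
           then nth (Z.to_nat i) x false
           else periodic u i.

Definition SInv (N : Z) (u x : list bool) : Prop :=
  exists w : Z, forall t : nat, exists a : Z, forall i : Z,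
    eca_iter N t (periodic u) i <> eca_iter N t (patch u x) i ->
    a <= i < a + w.

Inductive protocol (X Y : Type) : Type :=
| Leaf : bool -> protocol X Y
| AliceNode : (X -> bool) -> protocol X Y -> protocol X Y -> protocol X Y
| BobNode : (Y -> bool) -> protocol X Y -> protocol X Y -> protocol X Y.
Arguments Leaf {X Y}.
Arguments AliceNode {X Y}.
Arguments BobNode {X Y}.

(** Depth of the tree (a leaf has depth 0).  The label value [true]
    means "left", [false] means "right". *)
Fixpoint depth {X Y} (p : protocol X Y) : nat :=
  match p with
  | Leaf _ => 0
  | AliceNode _ l r | BobNode _ l r => S (Nat.max (depth l) (depth r))
  end.

Fixpoint run {X Y} (p : protocol X Y) (x : X) (y : Y) : bool :=
  match p with
  | Leaf b => b
  | AliceNode f l r => if f x then run l x y else run r x y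
  | BobNode g l r => if g y then run l x y else run r x y
  end.

(** D(g_i) <= C for g = P restricted to words of length n, split at i:
    a protocol of depth <= C whose output on (x,y) with |x| = i,
    |y| = n - i is true exactly when P (x ++ y) holds. *)
Definition CC_split_le (P : list bool -> Prop) (n i C : nat) : Prop :=
  exists p : protocol (list bool) (list bool),
    (depth p <= C)%nat /\
    forall x y : list bool,
      length x = i -> length y = (n - i)%nat ->
      (run p x y = true <-> P (x ++ y)).

(** D(g) <= C for g = P on {0,1}^n: D(g) = max_{0<=i<n} D(g_i). *)
Definition CC_le (P : list bool -> Prop) (n C : nat) : Prop :=
  forall i : nat, (i < n)%nat -> CC_split_le P n i C.

(* Main.v *)
Require Import Defs.
From Stdlib Require Import ZArith List Bool Lia Classical.
Import ListNotations.
Open Scope Z_scope.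

Lemma lr a b c : local_rule 156 a b c = xorb b (a && negb c).
Proof. destruct a, b, c; reflexivity. Qed.

Lemma iterS N t X : eca_iter N (S t) X = eca N (eca_iter N t X).
Proof. reflexivity. Qed.

Lemma proto_const (P : list bool -> Prop) : (forall z, P z) -> forall n, CC_le P n 2.
Proof.
  intros HP n i _. exists (Leaf true). split; [simpl; lia|].
  intros x y _ _. simpl. split; auto.
Qed.

Lemma proto_notin (b : bool) (P : list bool -> Prop) :
  (forall z, P z <-> ~ In b z) -> forall n, CC_le P n 2.
Proof.
  intros HP n i _.
  exists (AliceNode (fun x => if in_dec bool_dec b x then false else true)
            (BobNode (fun y => if in_dec bool_dec b y then false else true)
               (Leaf true) (Leaf false)) (Leaf false)).
  split; [simpl; lia|].
  intros x y _ _. rewrite HP, in_app_iff. simpl.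
  destruct (in_dec bool_dec b x); destruct (in_dec bool_dec b y); simpl;
    split; intros; try discriminate; tauto.
Qed.

Lemma exists_first (z : list bool) (b : bool) :
  In b z -> exists l, (l < length z)%nat /\ nth l z false = b /\
    forall k, (k < l)%nat -> nth k z false <> b.
Proof.
  induction z as [|c z IH]; intros H; [destruct H|].
  destruct (bool_dec c b) as [e|ne].
  - exists 0%nat. simpl. split; [lia|]. split; [auto|]. intros; lia.
  - destruct H as [H|H]; [congruence|].
    destruct (IH H) as [l [H1 [H2 H3]]].
    exists (S l). simpl. split; [lia|]. split; [auto|].
    intros [|k] Hk; simpl; [auto|]. apply H3; lia.
Qed.

Lemma exists_last (z : list bool) (b : bool) :
  In b z -> exists r, (r < length z)%nat /\ nth r z false = b /\
    forall k, (r < k)%nat -> (k < length z)%nat -> nth k z false <> b.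
Proof.
  induction z as [|c z IH]; intros H; [destruct H|].
  destruct (classic (In b z)) as [Hz|Hz].
  - destruct (IH Hz) as [r [H1 [H2 H3]]].
    exists (S r). simpl. split; [lia|]. split; [auto|].
    intros [|k] Hk1 Hk2; simpl in *; [lia|]. apply H3; lia.
  - destruct H as [H|H]; [|contradiction].
    exists 0%nat. simpl. split; [lia|]. split; [auto|].
    intros [|k] Hk1 Hk2; [lia|]. simpl in *. intro E. apply Hz.
    rewrite <- E. apply nth_In. lia.
Qed.

Lemma iter_ext N t X Y : (forall i, X i = Y i) -> forall i, eca_iter N t X i = eca_iter N t Y i.
Proof.
  intros H. induction t as [|t IH]; intros i; [apply H|].
  rewrite !iterS. unfold eca. rewrite !IH. reflexivity.
Qed.

Lemma patch_eq_notin u z b : (forall i, periodic u i = negb b) -> ~ In b z ->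
  forall i, patch u z i = periodic u i.
Proof.
  intros H0 Hn i. unfold patch.
  destruct ((0 <=? i) && (i <? Z.of_nat (length z))) eqn:E; [|reflexivity].
  apply andb_true_iff in E as [E1 E2]. apply Z.leb_le in E1. apply Z.ltb_lt in E2.
  rewrite H0.
  assert (Hl : (Z.to_nat i < length z)%nat) by lia.
  destruct (nth (Z.to_nat i) z false) eqn:F; destruct b; simpl; auto;
    exfalso; apply Hn; rewrite <- F; apply nth_In; auto.
Qed.

Lemma zero_case u z : (forall i, periodic u i = false) -> (SInv 156 u z <-> ~ In true z).
Proof.
  intros H0. 
  assert (BG : forall t i, eca_iter 156 t (periodic u) i = false).
  { induction t as [|t IH]; intros i; [apply H0|]. rewrite iterS. unfold eca.
    rewrite lr, !IH. reflexivity. }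
  split.
  2:{ intros Hn. exists 0. intros t. exists 0. intros i Hd. exfalso. apply Hd.
      symmetry. apply iter_ext. intros j. apply (patch_eq_notin u z true); auto. }
  intros [w Hw] Hin.
  destruct (exists_first z true Hin) as [l [Hl1 [Hl2 Hl3]]].
  destruct (exists_last z true Hin) as [r [Hr1 [Hr2 Hr3]]].
  set (X := fun t => eca_iter 156 t (patch u z)).
  assert (Hlr : (l <= r)%nat).
  { destruct (Nat.le_gt_cases l r); auto. exfalso. apply (Hl3 r); auto. }
  assert (P0 : forall i, patch u z i =
     if (0 <=? i) && (i <? Z.of_nat (length z)) then nth (Z.to_nat i) z false else false).
  { intros i. unfold patch. rewrite H0. reflexivity. }
  assert (LI : forall t, (forall i, i < Z.of_nat l -> X t i = false) /\ X t (Z.of_nat l) = true).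
  { induction t as [|t [IH1 IH2]].
    - split.
      + intros i Hi. unfold X; simpl. rewrite P0.
        destruct ((0 <=? i) && (i <? Z.of_nat (length z))) eqn:E; auto.
        apply andb_true_iff in E as [E1 E2]. apply Z.leb_le in E1.
        specialize (Hl3 (Z.to_nat i) ltac:(lia)). destruct (nth (Z.to_nat i) z false); congruence.
      + unfold X; simpl. rewrite P0.
        replace ((0 <=? Z.of_nat l) && (Z.of_nat l <? Z.of_nat (length z))) with true.
        * rewrite Nat2Z.id. auto.
        * symmetry. apply andb_true_iff. split; [apply Z.leb_le|apply Z.ltb_lt]; lia.
    - split.
      + intros i Hi. unfold X. rewrite iterS. unfold eca. rewrite lr.
        fold (X t). rewrite (IH1 (i-1)) by lia. rewrite (IH1 i) by lia. reflexivity.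
      + unfold X. rewrite iterS. unfold eca. rewrite lr.
        fold (X t). rewrite (IH1 (Z.of_nat l - 1)) by lia. rewrite IH2. reflexivity. }
  assert (RI : forall t, X t (Z.of_nat r + Z.of_nat t) = true /\
                 forall i, Z.of_nat r + Z.of_nat t < i -> X t i = false).
  { induction t as [|t [IH1 IH2]].
    - split.
      + unfold X; simpl. rewrite Z.add_0_r, P0.
        replace ((0 <=? Z.of_nat r) && (Z.of_nat r <? Z.of_nat (length z))) with true.
        * rewrite Nat2Z.id. auto.
        * symmetry. apply andb_true_iff. split; [apply Z.leb_le|apply Z.ltb_lt]; lia.
      + intros i Hi. unfold X; simpl. rewrite P0.
        destruct ((0 <=? i) && (i <? Z.of_nat (length z))) eqn:E; auto.
        apply andb_true_iff in E as [E1 E2]. apply Z.leb_le in E1. apply Z.ltb_lt in E2.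
        specialize (Hr3 (Z.to_nat i) ltac:(lia) ltac:(lia)). destruct (nth (Z.to_nat i) z false); congruence.
    - set (R := Z.of_nat r + Z.of_nat t) in *.
      replace (Z.of_nat r + Z.of_nat (S t)) with (R + 1) by lia.
      split.
      + unfold X. rewrite iterS. unfold eca. rewrite lr. fold (X t).
        replace (R + 1 - 1) with R by lia. rewrite IH1.
        rewrite (IH2 (R+1)) by lia. rewrite (IH2 (R+1+1)) by lia. reflexivity.
      + intros i Hi. unfold X. rewrite iterS. unfold eca. rewrite lr. fold (X t).
        rewrite (IH2 (i-1)) by lia. rewrite (IH2 i) by lia. reflexivity. }
  destruct (Hw (Z.to_nat w)) as [a Ha].
  assert (A1 := Ha (Z.of_nat l)). assert (A2 := Ha (Z.of_nat r + Z.of_nat (Z.to_nat w))).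
  rewrite BG in A1, A2.
  destruct (LI (Z.to_nat w)) as [_ L2]. destruct (RI (Z.to_nat w)) as [R1 _].
  unfold X in L2, R1. rewrite L2 in A1. rewrite R1 in A2.
  specialize (A1 ltac:(discriminate)). specialize (A2 ltac:(discriminate)).
  lia.
Qed.

Lemma one_case u z : (forall i, periodic u i = true) -> (SInv 156 u z <-> ~ In false z).
Proof.
  intros H0.
  assert (BG : forall t i, eca_iter 156 t (periodic u) i = true).
  { induction t as [|t IH]; intros i; [apply H0|]. rewrite iterS. unfold eca.
    rewrite lr, !IH. reflexivity. }
  split.
  2:{ intros Hn. exists 0. intros t. exists 0. intros i Hd. exfalso. apply Hd.
      symmetry. apply iter_ext. intros j. apply (patch_eq_notin u z false); auto. }
  intros [w Hw] Hin.
  destruct (exists_first z false Hin) as [l [Hl1 [Hl2 Hl3]]].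
  destruct (exists_last z false Hin) as [r [Hr1 [Hr2 Hr3]]].
  set (X := fun t => eca_iter 156 t (patch u z)).
  assert (Hlr : (l <= r)%nat).
  { destruct (Nat.le_gt_cases l r); auto. exfalso. apply (Hl3 r); auto. }
  assert (P0 : forall i, patch u z i =
     if (0 <=? i) && (i <? Z.of_nat (length z)) then nth (Z.to_nat i) z false else true).
  { intros i. unfold patch. rewrite H0. reflexivity. }
  assert (RI : forall t, X t (Z.of_nat r) = false /\ forall i, Z.of_nat r < i -> X t i = true).
  { induction t as [|t [IH1 IH2]].
    - split.
      + unfold X; simpl. rewrite P0.
        replace ((0 <=? Z.of_nat r) && (Z.of_nat r <? Z.of_nat (length z))) with true.
        * rewrite Nat2Z.id. auto.
        * symmetry. apply andb_true_iff. split; [apply Z.leb_le|apply Z.ltb_lt]; lia.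
      + intros i Hi. unfold X; simpl. rewrite P0.
        destruct ((0 <=? i) && (i <? Z.of_nat (length z))) eqn:E; auto.
        apply andb_true_iff in E as [E1 E2]. apply Z.leb_le in E1. apply Z.ltb_lt in E2.
        specialize (Hr3 (Z.to_nat i) ltac:(lia) ltac:(lia)). destruct (nth (Z.to_nat i) z false); congruence.
    - split.
      + unfold X. rewrite iterS. unfold eca. rewrite lr. fold (X t).
        rewrite IH1. rewrite (IH2 (Z.of_nat r + 1)) by lia. rewrite andb_false_r. reflexivity.
      + intros i Hi. unfold X. rewrite iterS. unfold eca. rewrite lr. fold (X t).
        rewrite (IH2 i) by lia. rewrite (IH2 (i+1)) by lia. rewrite andb_false_r. reflexivity. }
  assert (LI : forall t, X t (Z.of_nat l - Z.of_nat t) = false /\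
                 forall i, i < Z.of_nat l - Z.of_nat t -> X t i = true).
  { induction t as [|t [IH1 IH2]].
    - split.
      + unfold X; simpl. rewrite Z.sub_0_r, P0.
        replace ((0 <=? Z.of_nat l) && (Z.of_nat l <? Z.of_nat (length z))) with true.
        * rewrite Nat2Z.id. auto.
        * symmetry. apply andb_true_iff. split; [apply Z.leb_le|apply Z.ltb_lt]; lia.
      + intros i Hi. unfold X; simpl. rewrite P0.
        destruct ((0 <=? i) && (i <? Z.of_nat (length z))) eqn:E; auto.
        apply andb_true_iff in E as [E1 E2]. apply Z.leb_le in E1.
        specialize (Hl3 (Z.to_nat i) ltac:(lia)). destruct (nth (Z.to_nat i) z false); congruence.
    - set (L := Z.of_nat l - Z.of_nat t) in *.
      replace (Z.of_nat l - Z.of_nat (S t)) with (L - 1) by lia.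
      split.
      + unfold X. rewrite iterS. unfold eca. rewrite lr. fold (X t).
        replace (L - 1 + 1) with L by lia. rewrite IH1.
        rewrite (IH2 (L-1)) by lia. rewrite (IH2 (L-1-1)) by lia. reflexivity.
      + intros i Hi. unfold X. rewrite iterS. unfold eca. rewrite lr. fold (X t).
        rewrite (IH2 (i-1)) by lia. rewrite (IH2 i) by lia. rewrite (IH2 (i+1)) by lia.
        reflexivity. }
  destruct (Hw (Z.to_nat w)) as [a Ha].
  assert (A1 := Ha (Z.of_nat r)). assert (A2 := Ha (Z.of_nat l - Z.of_nat (Z.to_nat w))).
  rewrite BG in A1, A2.
  destruct (LI (Z.to_nat w)) as [L2 _]. destruct (RI (Z.to_nat w)) as [R1 _].
  unfold X in L2, R1. rewrite L2 in A2. rewrite R1 in A1.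
  specialize (A1 ltac:(discriminate)). specialize (A2 ltac:(discriminate)).
  lia.
Qed.

Lemma periodic_shift u z k : u <> nil ->
  periodic u (z + Z.of_nat (length u) * k) = periodic u z.
Proof.
  intros Hu. unfold periodic. rewrite (Z.mul_comm _ k), Z.mod_add; auto.
  destruct u; [congruence|]. simpl. lia.
Qed.

Lemma discrete_ivt (g : Z -> bool) : forall n p, g p = false -> g (p + Z.of_nat n) = true ->
  exists m, g m = false /\ g (m+1) = true.
Proof.
  induction n as [|n IH]; intros p H1 H2.
  - rewrite Z.add_0_r in H2. congruence.
  - destruct (g (p+1)) eqn:E.
    + exists p; auto.
    + apply (IH (p+1)); auto. replace (p + 1 + Z.of_nat n) with (p + Z.of_nat (S n)) by lia. auto.
Qed.

Definition Inv (a b : Z) (X Y : config) : Prop :=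
  (forall i, (i <= a+1 \/ b <= i) -> X i = Y i) /\
  X a = false /\ X (a+1) = true /\ X b = false /\ X (b+1) = true.

Lemma Inv_step a b X Y : Inv a b X Y -> Inv a b (eca 156 X) (eca 156 Y).
Proof.
  intros [Ag [W1 [W2 [W3 W4]]]].
  assert (WX : forall c, X c = false -> X (c+1) = true ->
            eca 156 X c = false /\ eca 156 X (c+1) = true).
  { intros c H1 H2. unfold eca. rewrite !lr. replace (c+1-1) with c by lia.
    rewrite H1, H2. rewrite andb_false_r. split; reflexivity. }
  assert (WY : forall c, Y c = false -> Y (c+1) = true ->
            eca 156 Y c = false /\ eca 156 Y (c+1) = true).
  { intros c H1 H2. unfold eca. rewrite !lr. replace (c+1-1) with c by lia.
    rewrite H1, H2. rewrite andb_false_r. split; reflexivity. }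
  assert (Ya : Y a = false) by (rewrite <- Ag by lia; auto).
  assert (Ya1 : Y (a+1) = true) by (rewrite <- Ag by lia; auto).
  assert (Yb : Y b = false) by (rewrite <- Ag by lia; auto).
  assert (Yb1 : Y (b+1) = true) by (rewrite <- Ag by lia; auto).
  destruct (WX a W1 W2), (WX b W3 W4), (WY a Ya Ya1), (WY b Yb Yb1).
  split; [|tauto].
  intros i Hi.
  destruct (Z.le_gt_cases i a).
  { unfold eca. rewrite (Ag (i-1)), (Ag i), (Ag (i+1)) by lia. reflexivity. }
  destruct (Z.eq_dec i (a+1)). { subst. congruence. }
  destruct (Z.eq_dec i b). { subst. congruence. }
  destruct (Z.eq_dec i (b+1)). { subst. congruence. }
  unfold eca. rewrite (Ag (i-1)), (Ag i), (Ag (i+1)) by lia. reflexivity.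
Qed.

Lemma nonconst_case u x : u <> nil -> (exists p, periodic u p = false) ->
  (exists q, periodic u q = true) -> SInv 156 u x.
Proof.
  intros Hu [p Hp] [q Hq].
  set (L := Z.of_nat (length u)).
  assert (HL : 1 <= L) by (unfold L; destruct u; [congruence|simpl; lia]).
  set (q' := q + L * (Z.abs (p - q) + 1)).
  assert (Hq' : periodic u q' = true) by (unfold q', L; rewrite periodic_shift; auto).
  destruct (discrete_ivt (periodic u) (Z.to_nat (q' - p)) p Hp) as [m [Hm1 Hm2]].
  { replace (p + Z.of_nat (Z.to_nat (q' - p))) with q'; auto. unfold q'. nia. }
  set (a := m + L * (- (Z.abs m + 2))).
  set (b := m + L * (Z.abs m + Z.of_nat (length x))).
  assert (Ha1 : a + 1 <= -1) by (unfold a; nia).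
  assert (Hb1 : Z.of_nat (length x) <= b) by (unfold b; nia).
  assert (Pa : periodic u a = false) by (unfold a, L; rewrite periodic_shift; auto).
  assert (Pb : periodic u b = false) by (unfold b, L; rewrite periodic_shift; auto).
  assert (Pa1 : periodic u (a+1) = true).
  { unfold a, L. replace (m + Z.of_nat (length u) * - (Z.abs m + 2) + 1)
      with (m + 1 + Z.of_nat (length u) * - (Z.abs m + 2)) by lia.
    rewrite periodic_shift; auto. }
  assert (Pb1 : periodic u (b+1) = true).
  { unfold b, L. replace (m + Z.of_nat (length u) * (Z.abs m + Z.of_nat (length x)) + 1)
      with (m + 1 + Z.of_nat (length u) * (Z.abs m + Z.of_nat (length x))) by lia.
    rewrite periodic_shift; auto. }
  assert (I0 : Inv a b (periodic u) (patch u x)).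
  { split; [|tauto]. intros i Hi. unfold patch.
    destruct ((0 <=? i) && (i <? Z.of_nat (length x))) eqn:E; auto.
    apply andb_true_iff in E as [E1 E2]. apply Z.leb_le in E1. apply Z.ltb_lt in E2. lia. }
  assert (It : forall t, Inv a b (eca_iter 156 t (periodic u)) (eca_iter 156 t (patch u x))).
  { induction t as [|t IH]; [exact I0|]. rewrite !iterS. apply Inv_step; auto. }
  exists (b - a). intros t. exists (a + 2). intros i Hd.
  destruct (It t) as [Ag _].
  destruct (Z.le_gt_cases i (a+1)); [exfalso; apply Hd; apply Ag; lia|].
  destruct (Z.le_gt_cases b i); [exfalso; apply Hd; apply Ag; lia|].
  lia.
Qed.

Theorem mainTheorem11 :
  forall u : list bool, u <> nil ->
    exists C : nat, forall n : nat, CC_le (SInv 156%Z u) n C.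
Proof.
  intros u Hu. exists 2%nat.
  destruct (classic (forall i, periodic u i = false)) as [H0|H0].
  { apply (proto_notin true). intros z. apply zero_case; auto. }
  destruct (classic (forall i, periodic u i = true)) as [H1|H1].
  { apply (proto_notin false). intros z. apply one_case; auto. }
  apply proto_const. intros z. apply nonconst_case; auto.
  - apply not_all_ex_not in H1 as [p Hp]. exists p. destruct (periodic u p); congruence.
  - apply not_all_ex_not in H0 as [p Hp]. exists p. destruct (periodic u p); congruence.
Qed.
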